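(* Let $p$ be a positive integer, let $J_1,\dots,J_p\in\mathcal{D}(X)$, and let $\ell_1,\dots,\ell_p$ be positive integers. Define the parallel rollout policy $\tilde\mu$ as follows. For each $x\in X$ and each $i=1,\dots,p$, let $\tilde J_i(x)$ be the optimal value of $$\min_{u_0,\dots,u_{\ell_i-1}}\ \sum_{k=0}^{\ell_i-1}g(x_k,u_k)+J_i(x_{\ell_i})\quad\text{s.t. } x_{k+1}=f(x_k,u_k),\ u_k\in U(x_k),\ k=0,\dots,\ell_i-1,\ x_0=x,$$ (equivalently $\tilde J_i(x)=(T^{\ell_i}J_i)(x)$), and let $(\tilde u_0^i,\dots,\tilde u_{\ell_i-1}^i)$ be a minimizing sequence; choose $\tilde i\in\arg\min_{i=1,\dots,p}\tilde J_i(x)$ and set $\tilde\mu(x)=\tilde u_0^{\tilde i}$. Let $\tilde J(x)=\min_{i=1,\dots,p}\tilde J_i(x)$. Then $J_{\tilde\mu}(x)\le\tilde J(x)$ for all $x\in X$.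
   Context: Setting: $X$ (state space) and $U$ (control space) are sets; for each $x\in X$, $U(x)\subset U$ is nonempty; $f:X\times U\to X$ gives dynamics $x_{k+1}=f(x_k,u_k)$; the stage cost $g$ satisfies $0\le g(x,u)\le\infty$ for all $x\in X$, $u\in U(x)$. A stationary policy is a map $\mu:X\to U$ with $\mu(x)\in U(x)$; its cost function is $J_\mu(x_0)=\sum_{k=0}^\infty g(x_k,\mu(x_k))$ with $x_{k+1}=f(x_k,\mu(x_k))$. $\mathcal{E}^+(X)$ denotes the set of all functions $J:X\to[0,\infty]$. The Bellman operator is $(TJ)(x)=\inf_{u\in U(x)}\{g(x,u)+J(f(x,u))\}$; $T^k$ is its $k$-fold composition. The region of decreasing is $\mathcal{D}(X)=\{J\in\mathcal{E}^+(X): (TJ)(x)\le J(x)\ \forall x\in X\}$. Standing assumption: for every $J\in\mathcal{E}^+(X)$ and every $x\in X$, the infimum defining $(TJ)(x)$ is attained. *)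

(* Defs.v *)
From mathcomp Require Import all_boot all_order all_algebra.
From mathcomp Require Import all_classical all_reals all_analysis.
Set Implicit Arguments. Unset Strict Implicit. Unset Printing Implicit Defensive.
Import Order.TTheory GRing.Theory Num.Theory.
Local Open Scope classical_set_scope.
Local Open Scope ereal_scope.

Section DP.
Context {R : realType} {X U : Type}.

Definition bellman (Uc : X -> set U) (f : X -> U -> X) (g : X -> U -> \bar R)
  (J : X -> \bar R) : X -> \bar R :=
  fun x => ereal_inf [set g x u + J (f x u) | u in Uc x].

Definition in_D (Uc : X -> set U) (f : X -> U -> X) (g : X -> U -> \bar R)
  (J : X -> \bar R) : Prop :=
  (forall x, 0 <= J x) /\ (forall x, bellman Uc f g J x <= J x).

Fixpoint traj (f : X -> U -> X) (x0 : X) (us : nat -> U) (k : nat) : X :=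
  match k with
  | 0 => x0
  | k.+1 => f (traj f x0 us k) (us k)
  end.

Definition feasible (Uc : X -> set U) (f : X -> U -> X) (x0 : X) (us : nat -> U)
  (l : nat) : Prop :=
  forall k, (k < l)%N -> Uc (traj f x0 us k) (us k).

Definition stage_cost (f : X -> U -> X) (g : X -> U -> \bar R) (J : X -> \bar R)
  (x0 : X) (us : nat -> U) (l : nat) : \bar R :=
  \sum_(k < l) g (traj f x0 us k) (us k) + J (traj f x0 us l).

Definition lookahead_value (Uc : X -> set U) (f : X -> U -> X) (g : X -> U -> \bar R)
  (J : X -> \bar R) (l : nat) (x : X) : \bar R :=
  ereal_inf [set stage_cost f g J x us l | us in [set us | feasible Uc f x us l]].

Fixpoint ptraj (f : X -> U -> X) (mu : X -> U) (x0 : X) (k : nat) : X :=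
  match k with
  | 0 => x0
  | k.+1 => let y := ptraj f mu x0 k in f y (mu y)
  end.

Definition policy_cost (f : X -> U -> X) (g : X -> U -> \bar R) (mu : X -> U)
  (x0 : X) : \bar R :=
  \sum_(0 <= k <oo) g (ptraj f mu x0 k) (mu (ptraj f mu x0 k)).

End DP.

(* Main.v *)
Require Import Defs.
From mathcomp Require Import all_boot all_order all_algebra.
From mathcomp Require Import all_classical all_reals all_analysis.
Import Order.TTheory GRing.Theory Num.Theory.
Local Open Scope classical_set_scope.
Local Open Scope ereal_scope.

Section Aux.
Context {R : realType} {X U : Type}.
Implicit Types (f : X -> U -> X) (g : X -> U -> \bar R).

Lemma traj_ext f x (us vs : nat -> U) n :
  (forall k, (k < n)%N -> us k = vs k) ->
  forall k, (k <= n)%N -> traj f x us k = traj f x vs k.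
Proof.
move=> H; elim=> [|k IH] //= Hk.
rewrite IH ?(ltnW Hk) // H //.
Qed.

Lemma traj_shift f x (us : nat -> U) k :
  traj f (f x (us 0%N)) (fun j => us j.+1) k = traj f x us k.+1.
Proof. by elim: k => [|k IH] //=; rewrite IH. Qed.

Lemma ptraj_shift f (mu : X -> U) x k :
  ptraj f mu (f x (mu x)) k = ptraj f mu x k.+1.
Proof. by elim: k => [|k IH] //=; rewrite IH. Qed.

Lemma bigmin_le (p : nat) (F : 'I_p -> \bar R) j :
  \big[mine/+oo]_(i < p) F i <= F j.
Proof.
rewrite /index_enum; have : j \in (Finite.enum 'I_p) by rewrite -enumT mem_enum.
elim: (Finite.enum 'I_p) => [|a s IH] //.
rewrite big_cons inE => /orP [/eqP ->|/IH H]; rewrite ge_min ?lexx //.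
by rewrite H orbT.
Qed.

Lemma le_bigmin (p : nat) (F : 'I_p -> \bar R) y :
  (forall j, y <= F j) -> y <= \big[mine/+oo]_(i < p) F i.
Proof.
move=> H; apply: (big_ind (fun z => y <= z)) => //.
- exact: leey.
- by move=> a b Ha Hb; rewrite le_min Ha Hb.
Qed.

End Aux.

Theorem proposition4 (R : realType) (X U : Type) (Uc : X -> set U)
  (f : X -> U -> X) (g : X -> U -> \bar R)
  (HU : forall x, Uc x !=set0)
  (Hg : forall x u, Uc x u -> 0 <= g x u)
  (Hattain : forall J : X -> \bar R, (forall x, 0 <= J x) ->
     forall x, exists2 u, Uc x u & g x u + J (f x u) = bellman Uc f g J x)
  (p : nat) (Hp : (0 < p)%N)
  (J : 'I_p -> X -> \bar R) (HJ : forall i, in_D Uc f g (J i))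
  (l : 'I_p -> nat) (Hl : forall i, (0 < l i)%N)
  (mu : X -> U)
  (Hmu : forall x, exists i : 'I_p,
     (forall j : 'I_p, lookahead_value Uc f g (J i) (l i) x
                        <= lookahead_value Uc f g (J j) (l j) x) /\
     exists us : nat -> U,
       [/\ feasible Uc f x us (l i),
           stage_cost f g (J i) x us (l i) = lookahead_value Uc f g (J i) (l i) x
         & us 0%N = mu x]) :
  forall x : X,
    policy_cost f g mu x <= \big[mine/+oo]_(i < p) lookahead_value Uc f g (J i) (l i) x.
Proof.
set V := fun i => lookahead_value Uc f g (J i) (l i).
set Vt := fun x => \big[mine/+oo]_(i < p) V i x.
have Vge0 : forall i y, 0 <= V i y.
  move=> i y; apply/ereal_infP => _ [us Hus <-].
  rewrite /stage_cost; apply: adde_ge0; last by case: (HJ i).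
  rewrite big_seq_cond; apply: sume_ge0 => k /andP [_ _]; apply: Hg; exact: Hus.
have Vtge0 : forall y, 0 <= Vt y by move=> y; apply: le_bigmin.
have Hext : forall i y (vs : nat -> U) m, l i = m.+1 -> feasible Uc f y vs m ->
    V i y <= stage_cost f g (J i) y vs m.
  move=> i y vs m Hli Hvs.
  have [J0 Jb] := HJ i.
  set z := traj f y vs m.
  have [u Hu Hbu] := Hattain (J i) J0 z.
  pose ws := fun k => if (k < m)%N then vs k else u.
  have Htr : forall k, (k <= m)%N -> traj f y ws k = traj f y vs k.
    by apply: traj_ext => k Hk; rewrite /ws Hk.
  have Hws : feasible Uc f y ws (m.+1).
    move=> k; rewrite ltnS leq_eqVlt => /orP [/eqP ->|Hk].
      by rewrite Htr // /ws ltnn.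
    rewrite Htr; last exact: ltnW.
    rewrite /ws Hk; exact: Hvs.
  rewrite /V Hli.
  apply: (le_trans (y := stage_cost f g (J i) y ws m.+1)).
    by apply: ereal_inf_lbound; exists ws.
  rewrite /stage_cost big_ord_recr /= Htr // /ws ltnn -/z -addeA.
  apply: leeD; last by rewrite Hbu; exact: Jb.
  rewrite le_eqVlt; apply/orP; left; apply/eqP.
  apply: eq_bigr => k _; rewrite ltn_ord Htr //; exact: ltnW.
have Hstep : forall x, g x (mu x) + Vt (f x (mu x)) <= Vt x.
  move=> x; have [i [Hmin [us [Hf Hc H0]]]] := Hmu x.
  have -> : Vt x = V i x.
    apply/eqP; rewrite eq_le bigmin_le /=; exact: le_bigmin.
  rewrite /V -Hc.
  move: (Hl i) Hf; case Eli: (l i) => [|m] // _ Hf.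
  rewrite /stage_cost big_ord_recl /= -addeA H0.
  apply: leeD2l.
  rewrite -H0.
  apply: (le_trans (y := V i (f x (us 0%N)))); first exact: bigmin_le.
  have Hfs : feasible Uc f (f x (us 0%N)) (fun j => us j.+1) m.
    move=> k Hk; rewrite traj_shift; exact: (Hf k.+1 Hk).
  apply: le_trans (Hext i (f x (us 0%N)) (fun j => us j.+1) m Eli Hfs) _.
  rewrite /stage_cost traj_shift /=.
  apply: leeD; last exact: lexx.
  rewrite le_eqVlt; apply/orP; left; apply/eqP.
  apply: eq_bigr => k _; rewrite traj_shift /= add0n /bump leq0n add1n //.
have Hadm : forall y, Uc y (mu y).
  move=> y; have [i [_ [us [Hf _ H0]]]] := Hmu y.
  rewrite -H0; exact: (Hf 0%N (Hl i)).
have Hind : forall N x, \sum_(k < N) g (ptraj f mu x k) (mu (ptraj f mu x k))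
    + Vt (ptraj f mu x N) <= Vt x.
  elim=> [|N IH] x; first by rewrite big_ord0 add0e.
  apply: le_trans (Hstep x).
  have H := IH (f x (mu x)).
  rewrite (eq_bigr (fun k : 'I_N => g (ptraj f mu x k.+1) (mu (ptraj f mu x k.+1)))) in H; last first.
    by move=> k _; rewrite ptraj_shift.
  rewrite ptraj_shift in H.
  rewrite big_ord_recl -addeA; apply: leeD2l.
  apply: le_trans H; rewrite le_eqVlt; apply/orP; left; apply/eqP.
  congr (_ + _); apply: eq_bigr => k _; rewrite /bump leq0n add1n //.
move=> x; rewrite /policy_cost.
apply: lime_le.
  apply: (is_cvg_nneseries _ (P := xpredT)) => n _ _; exact: Hg.
apply: nearW => n /=.
rewrite big_mkord.
apply: le_trans (Hind n x).
rewrite -[X in X <= _]adde0; apply: leeD2l; exact: Vtge0.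
Qed.
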